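(* There is an absolute constant $c>0$ such that for every finite simple graph $G=(V,E)$ with maximum degree $d\ge 1$, there is an injective placement of the vertices of $G$ on the unit sphere in $\mathbb{R}^3$ such that, drawing each edge as the straight-line segment between its endpoints, any two distinct edges sharing a common endpoint form an angle of at least $c/d$ at that endpoint (i.e., the 3D straight-line drawing has angular resolution $\Omega(1/d)$).
   Context: The angle between two segments sharing an endpoint is the angle in $[0,\pi]$ between the corresponding rays from that endpoint. The angular resolution of a drawing is the minimum, over all vertices $v$ and pairs of distinct edges incident to $v$, of the angle they form at $v$. *)

(* Defs.v *)
From Stdlib Require Import Reals Lra Lia List.
Open Scope R_scope.

Definition vec3 : Type := (R * R * R)%type.

Definition vsub (a b : vec3) : vec3 :=
  match a, b with (a1, a2, a3), (b1, b2, b3) => (a1 - b1, a2 - b2, a3 - b3) end.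

Definition dot (a b : vec3) : R :=
  match a, b with (a1, a2, a3), (b1, b2, b3) => a1 * b1 + a2 * b2 + a3 * b3 end.

Definition norm3 (a : vec3) : R := sqrt (dot a a).

Definition vangle (a b : vec3) : R := acos (dot a b / (norm3 a * norm3 b)).

Definition angle_at (pv pu pw : vec3) : R := vangle (vsub pu pv) (vsub pw pv).

(* A finite simple graph on the vertex set {0, ..., n-1} with boolean adjacency. *)
Definition simple_graph (n : nat) (adj : nat -> nat -> bool) : Prop :=
  (forall u v, (u < n)%nat -> (v < n)%nat -> adj u v = adj v u) /\
  (forall v, (v < n)%nat -> adj v v = false).

Definition degree (n : nat) (adj : nat -> nat -> bool) (v : nat) : nat :=
  length (filter (adj v) (seq 0 n)).

Definition max_degree_is (n : nat) (adj : nat -> nat -> bool) (d : nat) : Prop :=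
  (forall v, (v < n)%nat -> (degree n adj v <= d)%nat) /\
  (exists v, (v < n)%nat /\ degree n adj v = d).

(* Main.v *)
Require Import Defs.
From Stdlib Require Import Reals Lra Lia List Ratan.
Open Scope R_scope.

Lemma sin_le_x' x : 0 <= x -> sin x <= x.
Proof. intros H. destruct (Req_dec x 0) as [->|]. rewrite sin_0; lra.
  left; apply sin_lt_x; lra. Qed.

Lemma sq3 a1 b1 a2 b2 a3 b3 : 0 = (a1-b1)*(a1-b1)+(a2-b2)*(a2-b2)+(a3-b3)*(a3-b3) ->
  a1 = b1 /\ a2 = b2 /\ a3 = b3.
Proof. intros E. pose proof (Rle_0_sqr (a1-b1)); pose proof (Rle_0_sqr (a2-b2)); pose proof (Rle_0_sqr (a3-b3)).
  unfold Rsqr in *.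
  assert (E1 : (a1-b1)*(a1-b1) = 0) by lra. assert (E2 : (a2-b2)*(a2-b2) = 0) by lra. assert (E3 : (a3-b3)*(a3-b3) = 0) by lra.
  apply Rsqr_0_uniq in E1, E2, E3. lra. Qed.

Lemma key (P V W : vec3) : dot P P = 1 -> dot V V = 1 -> dot W W = 1 ->
  P <> V -> W <> V ->
  sqrt (dot (vsub P W) (vsub P W)) / 2 <= angle_at V P W.
Proof.
  destruct P as [[p1 p2] p3], V as [[v1 v2] v3], W as [[w1 w2] w3].
  unfold angle_at, vangle, norm3, dot, vsub. simpl.
  intros HP HV HW HPV HWV.
  set (aa := (p1 - v1) * (p1 - v1) + (p2 - v2) * (p2 - v2) + (p3 - v3) * (p3 - v3)).
  set (bb := (w1 - v1) * (w1 - v1) + (w2 - v2) * (w2 - v2) + (w3 - v3) * (w3 - v3)).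
  set (ab := (p1 - v1) * (w1 - v1) + (p2 - v2) * (w2 - v2) + (p3 - v3) * (w3 - v3)).
  set (pw := (p1 - w1) * (p1 - w1) + (p2 - w2) * (p2 - w2) + (p3 - w3) * (p3 - w3)).
  set (x := p1*v1+p2*v2+p3*v3). set (y := w1*v1+w2*v2+w3*v3). set (z := p1*w1+p2*w2+p3*w3).
  set (det := p1*(v2*w3-v3*w2) - p2*(v1*w3-v3*w1) + p3*(v1*w2-v2*w1)).
  assert (Hgram : (p1*p1+p2*p2+p3*p3)*(v1*v1+v2*v2+v3*v3)*(w1*w1+w2*w2+w3*w3) + 2*x*y*z
     - (p1*p1+p2*p2+p3*p3)*y*y - (v1*v1+v2*v2+v3*v3)*z*z - (w1*w1+w2*w2+w3*w3)*x*x = det*det)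
    by (unfold x, y, z, det; ring).
  rewrite HP, HV, HW in Hgram.
  assert (Haa : aa = (p1*p1+p2*p2+p3*p3) - 2*x + (v1*v1+v2*v2+v3*v3)) by (unfold aa, x; ring).
  assert (Hbb : bb = (w1*w1+w2*w2+w3*w3) - 2*y + (v1*v1+v2*v2+v3*v3)) by (unfold bb, y; ring).
  assert (Hab : ab = z - x - y + (v1*v1+v2*v2+v3*v3)) by (unfold ab, x, y, z; ring).
  assert (Hpw : pw = (p1*p1+p2*p2+p3*p3) - 2*z + (w1*w1+w2*w2+w3*w3)) by (unfold pw, z; ring).
  rewrite HP, HV in Haa. rewrite HW, HV in Hbb. rewrite HV in Hab. rewrite HP, HW in Hpw.
  assert (Hdd : 0 <= det*det) by (pose proof (Rle_0_sqr det); unfold Rsqr in *; lra).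
  assert (Haa0 : 0 < aa).
  { assert (0 <= aa) by (unfold aa; pose proof (Rle_0_sqr (p1-v1)); pose proof (Rle_0_sqr (p2-v2)); pose proof (Rle_0_sqr (p3-v3)); unfold Rsqr in *; lra).
    destruct (Rle_lt_or_eq_dec 0 aa H) as [|E]; auto.
    exfalso; apply HPV. unfold aa in E.
    destruct (sq3 _ _ _ _ _ _ E) as [? [? ?]]; subst; auto. }
  assert (Hbb0 : 0 < bb).
  { assert (0 <= bb) by (unfold bb; pose proof (Rle_0_sqr (w1-v1)); pose proof (Rle_0_sqr (w2-v2)); pose proof (Rle_0_sqr (w3-v3)); unfold Rsqr in *; lra).
    destruct (Rle_lt_or_eq_dec 0 bb H) as [|E]; auto.
    exfalso; apply HWV. unfold bb in E.
    destruct (sq3 _ _ _ _ _ _ E) as [? [? ?]]; subst; auto. }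
  fold aa bb ab pw.
  set (t := ab / (sqrt aa * sqrt bb)).
  assert (Hs : sqrt aa * sqrt bb = sqrt (aa*bb)) by (rewrite sqrt_mult; lra).
  assert (Hsq : (sqrt aa * sqrt bb)^2 = aa*bb).
  { rewrite Hs. simpl. rewrite Rmult_1_r. apply sqrt_sqrt. nra. }
  assert (Hpos : 0 < sqrt aa * sqrt bb) by (apply Rmult_lt_0_compat; apply sqrt_lt_R0; lra).
  assert (Hineq : aa*bb - ab*ab >= aa*bb*pw/4).
  { rewrite Haa, Hbb, Hab, Hpw. nra. }
  assert (Ht2 : 1 - t*t >= pw/4).
  { assert (E : t*t = ab*ab/(aa*bb)).
    { unfold t. rewrite <- Hsq. field. split; apply Rgt_not_eq, sqrt_lt_R0; lra. }
    rewrite E.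
    assert (0 < aa*bb) by nra.
    apply Rle_ge. apply (Rmult_le_reg_r (aa*bb)); auto.
    unfold Rdiv. field_simplify; try lra. }
  assert (Hpw0 : 0 <= pw) by (unfold pw; pose proof (Rle_0_sqr (p1-w1)); pose proof (Rle_0_sqr (p2-w2)); pose proof (Rle_0_sqr (p3-w3)); unfold Rsqr in *; lra).
  assert (Htb : -1 <= t <= 1) by (split; nra).
  fold t.
  pose proof (sin_acos t Htb) as Hsa.
  pose proof (acos_bound t) as Hb.
  pose proof (sin_le_x' (acos t) (proj1 Hb)) as Hsl.
  assert (sqrt pw / 2 <= sqrt (1 - t²)).
  { replace (sqrt pw / 2) with (sqrt (pw/4)).
    apply sqrt_le_1_alt. unfold Rsqr. lra.
    replace (pw/4) with (pw * / 4) by lra. rewrite sqrt_mult; try lra.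
    replace (/4) with ((/2)^2) by lra. rewrite sqrt_pow2; lra. }
  lra.
Qed.
From Stdlib Require Import Classical.

Lemma free_color (l : list nat) (D : nat) : (length l <= D)%nat -> exists c, (c <= D)%nat /\ ~ In c l.
Proof.
  intros H. apply NNPP. intros N.
  assert (incl (seq 0 (S D)) l).
  { intros c Hc. apply in_seq in Hc. apply NNPP. intros Hn. apply N. exists c. split; [lia|auto]. }
  pose proof (NoDup_incl_length (seq_NoDup (S D) 0) H0). rewrite length_seq in H1. lia.
Qed.

Lemma greedy (D : nat) (L : nat -> list nat) (N : nat) :
  (forall u, (length (L u) <= D)%nat) ->
  (forall u w, (u < N)%nat -> (w < N)%nat -> In w (L u) -> In u (L w)) ->
  exists col : nat -> nat, (forall u, (col u <= D)%nat) /\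
    forall u w, (u < N)%nat -> (w < N)%nat -> u <> w -> In w (L u) -> col u <> col w.
Proof.
  intros HL. induction N as [|N IH]; intros Hs.
  - exists (fun _ => 0%nat). split; intros; lia.
  - destruct IH as [col [Hb Hc]].
    { intros; apply Hs; auto; lia. }
    destruct (free_color (map col (L N)) D) as [c [Hc1 Hc2]].
    { rewrite length_map; auto. }
    exists (fun x => if Nat.eqb x N then c else col x). split.
    + intros u. destruct (Nat.eqb u N); auto.
    + intros u w Hu Hw Huw Hin.
      destruct (Nat.eqb_spec u N); destruct (Nat.eqb_spec w N); subst; try congruence.
      * intros E. apply Hc2. rewrite E. apply in_map; auto.
      * intros E. apply Hc2. rewrite <- E. apply in_map. apply Hs; auto.
      * apply Hc; auto; lia.
Qed.

Definition sc (n d : nat) (col : nat -> nat) (v : nat) : R :=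
  (2 * INR (col v mod S d) + INR v / INR n) / (4 * INR (S d)).
Definition tc (d : nat) (col : nat -> nat) (v : nat) : R :=
  INR (col v / S d) / (2 * INR (S d)).
Definition pt (n d : nat) (col : nat -> nat) (v : nat) : vec3 :=
  (sc n d col v, tc d col v, sqrt (1 - sc n d col v ^ 2 - tc d col v ^ 2)).

Lemma frac_bound (v n : nat) : (v < n)%nat -> 0 <= INR v / INR n < 1.
Proof.
  intros H. assert (0 < INR n) by (apply lt_0_INR; lia).
  assert (INR v < INR n) by (apply lt_INR; lia).
  pose proof (pos_INR v). split.
  - apply Rmult_le_pos; [lra| left; apply Rinv_0_lt_compat; lra].
  - apply (Rmult_lt_reg_r (INR n)); auto. unfold Rdiv. rewrite Rmult_assoc, Rinv_l; lra.
Qed.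

Lemma sc_bound n d col v : (v < n)%nat -> 0 <= sc n d col v < 1/2.
Proof.
  intros H. unfold sc. pose proof (frac_bound v n H).
  assert (Hm : (col v mod S d <= d)%nat) by (pose proof (Nat.mod_upper_bound (col v) (S d)); lia).
  apply le_INR in Hm. pose proof (pos_INR (col v mod S d)).
  rewrite S_INR. pose proof (pos_INR d).
  split.
  - apply Rmult_le_pos; [lra| left; apply Rinv_0_lt_compat; lra].
  - apply (Rmult_lt_reg_r (4 * (INR d + 1))); [lra|]. unfold Rdiv. rewrite Rmult_assoc, Rinv_l; lra.
Qed.

Lemma tc_bound d col v : (col v <= d * d)%nat -> 0 <= tc d col v < 1/2.
Proof.
  intros H. unfold tc.
  assert (Hm : (col v / S d <= d)%nat).
  { assert (col v / S d < S d)%nat; [|lia]. apply Nat.Div0.div_lt_upper_bound. nia. }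
  apply le_INR in Hm. pose proof (pos_INR (col v / S d)).
  rewrite S_INR. pose proof (pos_INR d).
  split.
  - apply Rmult_le_pos; [lra| left; apply Rinv_0_lt_compat; lra].
  - apply (Rmult_lt_reg_r (2 * (INR d + 1))); [lra|]. unfold Rdiv. rewrite Rmult_assoc, Rinv_l; lra.
Qed.

Lemma pt_unit n d col v : (v < n)%nat -> (col v <= d * d)%nat -> dot (pt n d col v) (pt n d col v) = 1.
Proof.
  intros H1 H2. pose proof (sc_bound n d col v H1). pose proof (tc_bound d col v H2).
  unfold pt, dot. rewrite sqrt_sqrt; [ring | nra].
Qed.

Lemma pt_inj n d col u v : (u < n)%nat -> (v < n)%nat -> pt n d col u = pt n d col v -> u = v.
Proof.
  intros Hu Hv E. injection E as E1 E2 E3. unfold sc in E1.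
  assert (0 < INR (S d)) by (apply lt_0_INR; lia).
  assert (0 < INR n) by (apply lt_0_INR; lia).
  assert (E4 : 2 * INR (col u mod S d) + INR u / INR n = 2 * INR (col v mod S d) + INR v / INR n).
  { apply (Rmult_eq_reg_r (/ (4 * INR (S d)))); [exact E1|]. apply Rinv_neq_0_compat; lra. }
  assert (E5 : INR (2 * (col u mod S d) * n + u) = INR (2 * (col v mod S d) * n + v)).
  { rewrite !plus_INR, !mult_INR. simpl (INR 2).
    apply (Rmult_eq_compat_r (INR n)) in E4. field_simplify in E4; try lra. }
  apply INR_eq in E5.
  assert (E6 : (u + (2 * (col u mod S d)) * n) mod n = (v + (2 * (col v mod S d)) * n) mod n).
  { f_equal. lia. }
  rewrite !Nat.Div0.mod_add, !Nat.mod_small in E6; auto.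
Qed.

Lemma nat_diff_sq (a b : nat) : a <> b -> 1 <= (INR a - INR b) * (INR a - INR b).
Proof.
  intros H. destruct (Nat.lt_gt_cases a b) as [[H1|H1] _]; auto.
  - assert (H2 : (S a <= b)%nat) by lia. apply le_INR in H2. rewrite S_INR in H2. nra.
  - assert (H2 : (S b <= a)%nat) by lia. apply le_INR in H2. rewrite S_INR in H2. nra.
Qed.

Lemma pt_sep n d col u w : (u < n)%nat -> (w < n)%nat -> col u <> col w ->
  (1 / (4 * INR (S d))) ^ 2 <= dot (vsub (pt n d col u) (pt n d col w)) (vsub (pt n d col u) (pt n d col w)).
Proof.
  intros Hu Hw Hc.
  assert (Hm : 0 < INR (S d)) by (apply lt_0_INR; lia).
  unfold pt, vsub, dot.
  set (z := sqrt (1 - sc n d col u ^ 2 - tc d col u ^ 2) - sqrt (1 - sc n d col w ^ 2 - tc d col w ^ 2)).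
  assert (Hz : 0 <= z * z) by (pose proof (Rle_0_sqr z); unfold Rsqr in *; lra).
  assert (He : (1 / (4 * INR (S d))) ^ 2 = 1 / (16 * INR (S d) * INR (S d))) by (field; lra).
  rewrite He.
  destruct (Nat.eq_dec (col u / S d) (col w / S d)) as [Ej|Nj].
  - assert (Ni : col u mod S d <> col w mod S d).
    { intros Ei. apply Hc. rewrite (Nat.div_mod_eq (col u) (S d)), (Nat.div_mod_eq (col w) (S d)). lia. }
    pose proof (nat_diff_sq _ _ Ni) as Hi.
    pose proof (frac_bound u n Hu). pose proof (frac_bound w n Hw).
    assert (0 < INR n) by (apply lt_0_INR; lia).
    set (X := 2 * (INR (col u mod S d) - INR (col w mod S d)) + (INR u / INR n - INR w / INR n)).
    assert (HX : 1 <= X * X).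
    { unfold X. set (D := INR (col u mod S d) - INR (col w mod S d)) in *.
      set (fu := INR u / INR n) in *. set (fw := INR w / INR n) in *.
      destruct (Rle_lt_dec D 0).
      + assert (D <= -1) by nra. assert (2 * D + (fu - fw) <= -1) by lra. nra.
      + assert (D >= 1) by nra. assert (2 * D + (fu - fw) >= 1) by lra. nra. }
    assert (Hs : sc n d col u - sc n d col w = X / (4 * INR (S d))) by (unfold sc, X; field; lra).
    assert (Hss : (sc n d col u - sc n d col w) * (sc n d col u - sc n d col w) = X * X / (16 * INR (S d) * INR (S d))).
    { rewrite Hs. field. lra. }
    assert (1 / (16 * INR (S d) * INR (S d)) <= X * X / (16 * INR (S d) * INR (S d))).
    { unfold Rdiv. apply Rmult_le_compat_r; [left; apply Rinv_0_lt_compat; nra | lra]. }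
    pose proof (Rle_0_sqr (tc d col u - tc d col w)); unfold Rsqr in *. lra.
  - pose proof (nat_diff_sq _ _ Nj) as Hj.
    set (X := INR (col u / S d) - INR (col w / S d)) in *.
    assert (Hs : tc d col u - tc d col w = X / (2 * INR (S d))) by (unfold tc, X; field; lra).
    assert (Hss : (tc d col u - tc d col w) * (tc d col u - tc d col w) = X * X / (4 * INR (S d) * INR (S d))).
    { rewrite Hs. field. lra. }
    assert (1 / (16 * INR (S d) * INR (S d)) <= X * X / (4 * INR (S d) * INR (S d))).
    { unfold Rdiv. rewrite !Rinv_mult. 
      assert (0 < / INR (S d)) by (apply Rinv_0_lt_compat; lra). nra. }
    pose proof (Rle_0_sqr (sc n d col u - sc n d col w)); unfold Rsqr in *. lra.
Qed.

Definition LL (n : nat) (adj : nat -> nat -> bool) (u : nat) : list nat :=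
  if Nat.ltb u n then flat_map (fun v => filter (adj v) (seq 0 n)) (filter (adj u) (seq 0 n)) else nil.

Lemma flat_map_len {A B} (f : A -> list B) (l : list A) k :
  (forall x, In x l -> (length (f x) <= k)%nat) -> (length (flat_map f l) <= length l * k)%nat.
Proof.
  induction l as [|a l IH]; intros H; simpl; auto.
  rewrite length_app. assert (length (f a) <= k)%nat by (apply H; simpl; auto).
  assert (length (flat_map f l) <= length l * k)%nat by (apply IH; intros; apply H; simpl; auto). lia.
Qed.

Theorem theorem1 :
  exists c : R, 0 < c /\
  forall (n : nat) (adj : nat -> nat -> bool) (d : nat),
    simple_graph n adj ->
    max_degree_is n adj d ->
    (1 <= d)%nat ->
    exists p : nat -> vec3,
      (forall u v, (u < n)%nat -> (v < n)%nat -> p u = p v -> u = v) /\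
      (forall v, (v < n)%nat -> norm3 (p v) = 1) /\
      (forall v u w, (v < n)%nat -> (u < n)%nat -> (w < n)%nat ->
         adj v u = true -> adj v w = true -> u <> w ->
         c / INR d <= angle_at (p v) (p u) (p w)).
Proof.
  exists (1/16). split; [lra|].
  intros n adj d [Hsym Hirr] [Hdeg _] Hd.
  destruct (greedy (d * d) (LL n adj) n) as [col [Hcb Hcol]].
  - intros u. unfold LL. destruct (Nat.ltb_spec u n); simpl; [|lia].
    eapply Nat.le_trans. apply flat_map_len with (k := d).
    + intros x Hx. apply filter_In in Hx. destruct Hx as [Hx _]. apply in_seq in Hx.
      apply Hdeg. lia.
    + pose proof (Hdeg u H). unfold degree in H0. nia.
  - intros u w Hu Hw Hin. unfold LL in *.
    destruct (Nat.ltb_spec u n); [|lia]. destruct (Nat.ltb_spec w n); [|lia].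
    apply in_flat_map in Hin. destruct Hin as [v [Hv1 Hv2]].
    apply filter_In in Hv1, Hv2. destruct Hv1 as [Hv1 Huv], Hv2 as [_ Hvw].
    apply in_seq in Hv1.
    apply in_flat_map. exists v. split; apply filter_In; split.
    + apply in_seq; lia.
    + rewrite Hsym; auto; lia.
    + apply in_seq; lia.
    + rewrite Hsym; auto; lia.
  - exists (pt n d col). split; [|split].
    + intros u v Hu Hv. apply pt_inj; auto.
    + intros v Hv. unfold norm3. rewrite pt_unit; auto. apply sqrt_1.
    + intros v u w Hv Hu Hw Hvu Hvw Huw.
      assert (Huv : u <> v) by (intros ->; rewrite Hirr in Hvu; auto; discriminate).
      assert (Hwv : w <> v) by (intros ->; rewrite Hirr in Hvw; auto; discriminate).
      assert (Hin : In w (LL n adj u)).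
      { unfold LL. destruct (Nat.ltb_spec u n); [|lia].
        apply in_flat_map. exists v. split; apply filter_In; split.
        - apply in_seq; lia.
        - rewrite Hsym; auto.
        - apply in_seq; lia.
        - auto. }
      pose proof (Hcol u w Hu Hw Huw Hin) as Hc.
      pose proof (pt_sep n d col u w Hu Hw Hc) as Hs.
      pose proof (key (pt n d col u) (pt n d col v) (pt n d col w)
        (pt_unit _ _ _ _ Hu (Hcb u)) (pt_unit _ _ _ _ Hv (Hcb v)) (pt_unit _ _ _ _ Hw (Hcb w))
        (fun E => Huv (pt_inj _ _ _ _ _ Hu Hv E)) (fun E => Hwv (pt_inj _ _ _ _ _ Hw Hv E))) as Hk.
      assert (Hm : 0 < INR (S d)) by (apply lt_0_INR; lia).
      assert (Hsq : 1 / (4 * INR (S d)) <= sqrt (dot (vsub (pt n d col u) (pt n d col w)) (vsub (pt n d col u) (pt n d col w)))).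
      { rewrite <- (sqrt_pow2 (1 / (4 * INR (S d)))).
        - apply sqrt_le_1_alt. exact Hs.
        - unfold Rdiv. rewrite Rmult_1_l. left; apply Rinv_0_lt_compat; lra. }
      assert (Hdr : 1 <= INR d) by (apply (le_INR 1 d) in Hd; simpl in Hd; lra).
      rewrite S_INR in Hsq, Hm.
      assert (1/16 / INR d <= 1 / (4 * (INR d + 1)) / 2).
      { apply (Rmult_le_reg_r (16 * INR d * (INR d + 1))). nra.
        field_simplify; lra. }
      lra.
Qed.
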